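(* (a) If $l$ is a positive multiple of $4$, then there exists a self-dual $A$-code of length $l$. (b) There exist self-dual $A$-codes of every length $l\ge1$ if and only if $f$ is a square in $\mathbb{F}[x]$. (c) Let $f=f_1^{e_1}\cdots f_t^{e_t}$ be the prime factorization of $f$ in $\mathbb{F}[x]$ and $d_i=\deg f_i$. Then the following are equivalent: (1) there exist self-dual $A$-codes of every even length; (2) $f=g^2f'$ for some $g,f'\in\mathbb{F}[x]$ such that $-1$ is a square in $\mathbb{F}[x]/\langle f'(x)\rangle$; (3) either $|\mathbb{F}|\equiv 3\pmod 4$ and $d_ie_i$ is even for every $1\le i\le t$, or $|\mathbb{F}|$ is even, or $|\mathbb{F}|\equiv1\pmod 4$.
   Context: Let $\mathbb{F}$ be a finite field, $f(x)\in\mathbb{F}[x]$ monic of degree $m$, $A=\mathbb{F}[x]/\langle f(x)\rangle$. An $A$-code of length $l$ is an $A$-submodule of $A^l$; its dual is $C^\perp=\{a\in A^l:\sum_ia_ic_i=0\ \forall c\in C\}$, and $C$ is self-dual if $C=C^\perp$. *)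

(* Defs.v *)
From HB Require Import structures.
From mathcomp Require Import all_boot all_order all_algebra.
Set Implicit Arguments. Unset Strict Implicit. Unset Printing Implicit Defensive.
Import GRing.Theory.
Local Open Scope ring_scope.

(* A-codes over a commutative ring A (used with A = F[x]/<f>, i.e. the
   mathcomp quotient ring {poly %/ f}). *)
Section Codes.
Variable A : comNzRingType.
Variable l : nat.

Definition code := 'rV[A]_l -> Prop.

Definition is_Acode (C : code) : Prop :=
  [/\ C 0,
      (forall u v, C u -> C v -> C (u + v)) &
      (forall (a : A) u, C u -> C (a *: u))].

Definition code_form (a c : 'rV[A]_l) : A := \sum_(i < l) a 0 i * c 0 i.

Definition dual_code (C : code) : code :=
  fun a => forall c, C c -> code_form a c = 0.

Definition self_dual (C : code) : Prop :=
  forall a, C a <-> dual_code C a.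

Definition exists_self_dual_code : Prop :=
  exists C : code, is_Acode C /\ self_dual C.
End Codes.

(* Main.v *)
Require Import Defs.
From HB Require Import structures.
From mathcomp Require Import all_boot all_order all_algebra all_field ring zify.
From Stdlib Require Import Classical.
Set Implicit Arguments. Unset Strict Implicit. Unset Printing Implicit Defensive.
Import GRing.Theory.
Local Open Scope ring_scope.

Section Gen.
Variable A : comNzRingType.

Lemma form_split m n (x y : 'rV[A]_(m + n)) :
  code_form x y = code_form (lsubmx x) (lsubmx y) + code_form (rsubmx x) (rsubmx y).
Proof.
by rewrite /code_form big_split_ord /=; congr (_ + _); apply: eq_bigr => i _; rewrite !mxE.
Qed.

Lemma sd_sum m n : exists_self_dual_code A m -> exists_self_dual_code A n ->
  exists_self_dual_code A (m + n).
Proof.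
move=> [C1 [[C10 C1D C1Z] sd1]] [C2 [[C20 C2D C2Z] sd2]].
exists (fun c => C1 (lsubmx c) /\ C2 (rsubmx c)); split.
  split.
  - by rewrite !linear0.
  - by move=> u v [? ?] [? ?]; rewrite !linearD; split; [apply: C1D|apply: C2D].
  - by move=> a u [? ?]; rewrite !linearZ; split; [apply: C1Z|apply: C2Z].
move=> a; split.
  move=> [h1 h2] c [c1 c2]; rewrite form_split.
  by rewrite ((sd1 _).1 h1 _ c1) ((sd2 _).1 h2 _ c2) addr0.
move=> hd; split.
  apply/(sd1 _).2 => c hc.
  have := hd (row_mx c 0); rewrite form_split row_mxKl row_mxKr.
  have -> : code_form (rsubmx a) (0 : 'rV_n) = 0.
    by rewrite /code_form big1 // => i _; rewrite (_ : (0 : 'rV[A]__) 0 i = 0) ?mulr0 // mxE.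
  by rewrite addr0; apply; split; rewrite ?row_mxKl ?row_mxKr.
apply/(sd2 _).2 => c hc.
have := hd (row_mx 0 c); rewrite form_split row_mxKl row_mxKr.
have -> : code_form (lsubmx a) (0 : 'rV_m) = 0.
  by rewrite /code_form big1 // => i _; rewrite (_ : (0 : 'rV[A]__) 0 i = 0) ?mulr0 // mxE.
by rewrite add0r; apply; split; rewrite ?row_mxKl ?row_mxKr.
Qed.

Definition rowseq n (s : seq A) : 'rV[A]_n := \row_(j < n) s`_j.

Local Notation j0 := (@ord0 3).
Local Notation j1 := (lift (@ord0 3) ord0).
Local Notation j2 := (lift (@ord0 3) (lift ord0 ord0)).
Local Notation j3 := (lift (@ord0 3) (lift ord0 (lift ord0 ord0))).

Lemma form4 (x y : 'rV[A]_4) : code_form x y =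
  x 0 j0 * y 0 j0 + x 0 j1 * y 0 j1 + x 0 j2 * y 0 j2 + x 0 j3 * y 0 j3.
Proof. by rewrite /code_form !big_ord_recl big_ord0 addr0 !addrA. Qed.

Lemma rowseqE n (s : seq A) j : (rowseq n s) 0 j = s`_j.
Proof. by rewrite mxE. Qed.

Lemma sd4 (a b : A) : a ^+ 2 + b ^+ 2 = -1 -> exists_self_dual_code A 4.
Proof.
move=> hab.
exists (fun c : 'rV_4 => c 0 j2 = a * c 0 j0 - b * c 0 j1 /\ c 0 j3 = b * c 0 j0 + a * c 0 j1).
split.
  split.
  - by rewrite !mxE !mulr0 subr0 addr0.
  - move=> u v [u2 u3] [v2 v3]; rewrite !mxE u2 u3 v2 v3; split; ring.
  - by move=> k u [u2 u3]; rewrite !mxE u2 u3; split; ring.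
move=> x; split.
  move=> [x2 x3] c [c2 c3]; rewrite form4 x2 x3 c2 c3.
  transitivity ((1 + (a ^+ 2 + b ^+ 2)) * (x 0 j0 * c 0 j0 + x 0 j1 * c 0 j1)); first ring.
  by rewrite hab subrr mul0r.
move=> hx.
have h1 : code_form x (rowseq 4 [:: 1; 0; a; b]) = 0.
  by apply: hx; rewrite !rowseqE /=; split; ring.
have h2 : code_form x (rowseq 4 [:: 0; 1; -b; a]) = 0.
  by apply: hx; rewrite !rowseqE /=; split; ring.
rewrite form4 !rowseqE /= in h1; rewrite form4 !rowseqE /= in h2.
have h1' : x 0 j0 = - (a * x 0 j2 + b * x 0 j3).
  apply/eqP; rewrite -subr_eq0 opprK; apply/eqP; rewrite -[RHS]h1; ring.
have h2' : x 0 j1 = b * x 0 j2 - a * x 0 j3.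
  apply/eqP; rewrite -subr_eq0; apply/eqP; rewrite -[RHS]h2; ring.
rewrite h1' h2'; split.
  transitivity (- (a ^+ 2 + b ^+ 2) * x 0 j2); last ring.
  by rewrite hab opprK mul1r.
transitivity (- (a ^+ 2 + b ^+ 2) * x 0 j3); last ring.
by rewrite hab opprK mul1r.
Qed.
End Gen.
Section Q.
Variables (F : finFieldType) (f : {poly F}).
Hypotheses (fm : f \is monic) (fs : (1 < size f)%N).
Local Notation A := {poly %/ f}.

Lemma mkE : mk_monic f = f.
Proof. by rewrite /mk_monic fs fm. Qed.

Lemma f_neq0 : f != 0.
Proof. by rewrite -size_poly_gt0 (ltn_trans _ fs). Qed.

Lemma in_qpolyE (q : {poly F}) : (in_qpoly f q : {poly F}) = q %% f.
Proof. by rewrite /= mkE (Pdiv.IdomainMonic.modpE fm). Qed.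

Lemma qvalK (u : A) : in_qpoly f (u : {poly F}) = u.
Proof. by apply: val_inj; exact: (in_qpoly_small (size_mk_monic u)). Qed.

Lemma in_qpoly_eq0 (q : {poly F}) : (in_qpoly f q == 0) = (f %| q).
Proof. by rewrite -val_eqE /= mkE -(Pdiv.IdomainMonic.modpE fm); apply/eqP/modp_eq0P. Qed.

Lemma modE (q : {poly F}) : q %% f = q - (q %/ f) * f.
Proof. by rewrite {2}(divp_eq q f) addrC addKr. Qed.

Lemma dvd_val (d : {poly F}) (q : {poly F}) : d %| f -> (d %| (in_qpoly f q : {poly F})) = (d %| q).
Proof. by move=> df; rewrite in_qpolyE -dvdp_mod. Qed.


Lemma qvM (u v : A) : (u * v : A) = (u : {poly F}) * v %% f :> {poly F}.
Proof. by rewrite -{1}(qvalK u) -{1}(qvalK v) -rmorphM in_qpolyE. Qed.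

Lemma qvD (u v : A) : (u + v : A) = (u : {poly F}) + v :> {poly F}.
Proof. by []. Qed.

Lemma qv0 : ((0 : A) : {poly F}) = 0.
Proof. by []. Qed.

Lemma form_q l (x c : 'rV[A]_l) :
  code_form x c = in_qpoly f (\sum_(i < l) (x 0 i : {poly F}) * (c 0 i)).
Proof. by rewrite rmorph_sum /code_form; apply: eq_bigr => i _; rewrite rmorphM /= !qvalK. Qed.

Lemma form_eq0 l (x c : 'rV[A]_l) :
  (code_form x c = 0) <-> (f %| \sum_(i < l) (x 0 i : {poly F}) * (c 0 i)).
Proof. by rewrite form_q -in_qpoly_eq0; split => /eqP. Qed.

Lemma dvd_mod (d q : {poly F}) : d %| f -> (d %| q %% f) = (d %| q).
Proof. by move=> df; rewrite -dvdp_mod. Qed.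

Lemma sd1 (g : {poly F}) : f = g ^+ 2 -> exists_self_dual_code A 1.
Proof.
move=> fg.
have gf : g %| f by rewrite fg dvdp_mulr.
have g0 : g != 0 by apply: contraNneq f_neq0; rewrite fg => ->; rewrite expr0n.
have fE : f %= g * g by rewrite fg expr2 eqpxx.
exists (fun c : 'rV[A]_1 => g %| (c 0 0 : {poly F})); split.
  split.
  - by rewrite mxE qv0 dvdp0.
  - by move=> u v hu hv; rewrite mxE qvD dvdp_add.
  - by move=> k u hu; rewrite mxE qvM dvd_mod // dvdp_mull.
move=> x; split.
  move=> hx c hc; apply/form_eq0; rewrite big_ord1 (eqp_dvdl _ fE).
  exact: dvdp_mul.
move=> hx.
have := hx (const_mx (in_qpoly f g)).
rewrite /= mxE in_qpolyE dvd_mod // dvdpp => /(_ isT) /form_eq0.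
rewrite big_ord1 mxE in_qpolyE (dvdp_mod _ (dvdpp f)) modp_mul -(dvdp_mod _ (dvdpp f)).
by rewrite (eqp_dvdl _ fE) dvdp_mul2r.
Qed.


Local Notation k0 := (@ord0 1).
Local Notation k1 := (lift (@ord0 1) ord0).

Definition row2 (u v : A) : 'rV[A]_2 := \row_(j < 2) (if j == k0 then u else v).

Lemma row2E0 u v : row2 u v 0 k0 = u. Proof. by rewrite mxE. Qed.
Lemma row2E1 u v : row2 u v 0 k1 = v. Proof. by rewrite mxE. Qed.

Lemma sum2 (P : 'I_2 -> {poly F}) : \sum_(i < 2) P i = P k0 + P k1.
Proof. by rewrite big_ord_recl big_ord1. Qed.

Lemma modstrip (x0 x1 p q : {poly F}) :
  (f %| x0 * (p %% f) + x1 * (q %% f)) = (f %| x0 * p + x1 * q).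
Proof.
by rewrite (dvdp_mod _ (dvdpp f)) modpD !modp_mul -modpD -(dvdp_mod _ (dvdpp f)).
Qed.

Lemma orth2 (g f' h t x0 x1 c0 c1 : {poly F}) : h ^+ 2 + 1 = t * f' ->
  g %| x0 -> g * f' %| x1 - h * x0 -> g %| c0 -> g * f' %| c1 - h * c0 ->
  g ^+ 2 * f' %| x0 * c0 + x1 * c1.
Proof.
move=> ht /dvdpP [a ea] /dvdpP [s es] /dvdpP [a' ea'] /dvdpP [s' es'].
have ex1 : x1 = s * (g * f') + h * x0 by rewrite -es; ring.
have ec1 : c1 = s' * (g * f') + h * c0 by rewrite -es'; ring.
rewrite ex1 ec1 ea ea'.
have -> : a * g * (a' * g) + (s * (g * f') + h * (a * g)) * (s' * (g * f') + h * (a' * g))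
  = a * a' * (h ^+ 2 + 1) * g ^+ 2 + (s * s' * f' + s * h * a' + h * a * s') * (g ^+ 2 * f').
  by ring.
rewrite ht.
have -> : a * a' * (t * f') * g ^+ 2 + (s * s' * f' + s * h * a' + h * a * s') * (g ^+ 2 * f')
  = (a * a' * t + s * s' * f' + s * h * a' + h * a * s') * (g ^+ 2 * f') by ring.
exact: dvdp_mull.
Qed.

Lemma sd2 (g f' h : {poly F}) : f = g ^+ 2 * f' -> f' %| h ^+ 2 + 1 ->
  exists_self_dual_code A 2.
Proof.
move=> fg /dvdpP [t ht].
have fE : f %= g ^+ 2 * f' by rewrite fg eqpxx.
have gf : g %| f by rewrite fg expr2 -mulrA dvdp_mulr.
have gff : g * f' %| f by rewrite fg expr2 -mulrA; apply: dvdp_mull; exact: dvdpp.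
have g0 : g != 0 by apply: contraNneq f_neq0; rewrite fg => ->; rewrite expr0n mul0r.
have f'0 : f' != 0 by apply: contraNneq f_neq0; rewrite fg => ->; rewrite mulr0.
pose C := fun c : 'rV[A]_2 => [/\ g %| (c 0 k0 : {poly F}), g %| (c 0 k1 : {poly F}) &
   g * f' %| (c 0 k1 : {poly F}) - h * (c 0 k0 : {poly F})].
exists C; split.
  split.
  - by rewrite /C !mxE qv0 mulr0 subr0 !dvdp0.
  - move=> u v [u0 u1 u2] [v0 v1 v2]; rewrite /C !mxE !qvD; split; [exact: dvdp_add|exact: dvdp_add|].
    rewrite (_ : _ - _ = ((u 0 k1 : {poly F}) - h * u 0 k0) + ((v 0 k1 : {poly F}) - h * v 0 k0)); last by ring.
    exact: dvdp_add.
  - move=> k u [u0 u1 u2]; rewrite /C !mxE !qvM !dvd_mod ?dvdp_mull //; split => //.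
    rewrite !modE.
    rewrite (_ : _ - _ = (k : {poly F}) * ((u 0 k1 : {poly F}) - h * u 0 k0) +
       (h * ((k : {poly F}) * u 0 k0 %/ f) - (k : {poly F}) * u 0 k1 %/ f) * f); last by ring.
    by rewrite dvdp_add ?dvdp_mull.
move=> x; split.
  move=> [x0 x1 x2] c [c0 c1 c2]; apply/form_eq0; rewrite sum2 (eqp_dvdl _ fE).
  exact: orth2 ht x0 x2 c0 c2.
move=> hx.
have h1 : code_form x (row2 (in_qpoly f g) (in_qpoly f (g * h))) = 0.
  apply: hx; rewrite /C !row2E0 !row2E1 !in_qpolyE !dvd_mod // dvdpp dvdp_mulr //.
  split => //; rewrite !modE.
  rewrite (_ : _ - _ = (h * (g %/ f) - (g * h) %/ f) * f); last by ring.
  exact: dvdp_mull.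
have h2 : code_form x (row2 0 (in_qpoly f (g * f'))) = 0.
  apply: hx; rewrite /C !row2E0 !row2E1 !in_qpolyE qv0 !dvd_mod // dvdp0 mulr0 subr0.
  by split => //; [exact: dvdp_mulr (dvdpp g) | rewrite dvd_mod // dvdpp].
move/form_eq0: h1; rewrite sum2 !row2E0 !row2E1 !in_qpolyE modstrip (eqp_dvdl _ fE) => H1.
move/form_eq0: h2; rewrite sum2 !row2E0 !row2E1 !in_qpolyE qv0 mulr0 add0r.
rewrite (dvdp_mod _ (dvdpp f)) modp_mul -(dvdp_mod _ (dvdpp f)) (eqp_dvdl _ fE) => H2.
rewrite /C; move: (x 0 k0 : {poly F}) (x 0 k1 : {poly F}) H1 H2 => x0 x1 H1 H2.
have e1 : g * f' %| x0 + h * x1.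
  rewrite -(dvdp_mul2r _ _ g0) (_ : g * f' * g = g ^+ 2 * f'); last by ring.
  by rewrite (_ : (x0 + h * x1) * g = x0 * g + x1 * (g * h)); last by ring.
have e2 : g %| x1.
  rewrite -(dvdp_mul2r _ _ (mulf_neq0 g0 f'0)) (_ : g * (g * f') = g ^+ 2 * f') //; ring.
have e0 : g %| x0.
  rewrite (_ : x0 = (x0 + h * x1) - h * x1); last by ring.
  by rewrite dvdp_sub ?dvdp_mull // (dvdp_trans (dvdp_mulr f' (dvdpp g)) e1).
split => //.
rewrite (_ : x1 - h * x0 = x1 * (h ^+ 2 + 1) - h * (x0 + h * x1)); last by ring.
apply: dvdp_sub; last exact: dvdp_mull.
by apply: dvdp_mul => //; rewrite ht dvdp_mull.
Qed.
End Q.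
Section FF.
Variable K : finFieldType.

Lemma cardR0 : (#|K|%:R : K) = 0.
Proof.
have : \sum_(x : K) (x + 1) = \sum_(x : K) x.
  by rewrite [RHS](reindex_inj (addIr 1)).
rewrite big_split /= sumr_const => h.
have := addrI _ (etrans h (esym (addr0 _))).
by rewrite cardT -cardE.
Qed.

Lemma odd_two (hq : odd #|K|) : (2%:R : K) != 0.
Proof.
apply/negP => h2.
have c2 : (2 \in [pchar K])%N by rewrite inE /= h2.
by move: (dvdn_pcharf c2 #|K|); rewrite cardR0 eqxx dvdn2 hq.
Qed.

Lemma even_two (hq : ~~ odd #|K|) : (1 + 1 : K) = 0.
Proof.
have := expf_card (-1 : K).
rewrite -signr_odd (negbTE hq) expr0 => h.
by rewrite {2}h subrr.
Qed.

Lemma no_sqrtm1 (hq : (#|K| %% 4 = 3)%N) (x : K) : x ^+ 2 != -1.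
Proof.
apply/negP => /eqP hx.
have x0 : x != 0.
  by apply/eqP => x0; move: hx; rewrite x0 expr0n /= => /eqP; rewrite eq_sym oppr_eq0 oner_eq0.
have oq : odd #|K| by move: hq; set q := #|K|; lia.
have := expf_card x.
rewrite (divn_eq #|K| 4) hq exprD mulnC exprM (_ : x ^+ 4 = 1); last first.
  by rewrite (_ : 4 = 2 * 2)%N // exprM hx expr2 mulrNN mulr1.
rewrite expr1n mul1r exprS hx mulrN1 => h.
have : (2%:R : K) * x = 0 by rewrite mulr2n mulrDl mul1r -{1}h addNr.
by move/eqP; rewrite mulf_eq0 (negbTE (odd_two oq)) (negbTE x0).
Qed.

Lemma sqrtm1 (hq : (#|K| %% 4 = 1)%N) : exists x : K, x ^+ 2 = -1.
Proof.
set q := #|K|.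
have q1 : (1 < q)%N := finNzRing_gt1 K.
pose k := (q %/ 4)%N.
have qE : q = (4 * k + 1)%N by rewrite /k {1}(divn_eq q 4) hq mulnC.
have k0 : (0 < k)%N by move: q1; rewrite qE; case: (k) => //.
pose n := (2 * k)%N.
pose P : {poly K} := 'X^n - 1.
have sP : size P = n.+1 by rewrite /P size_Xn_sub_1 // /n; lia.
have P0 : P != 0 by rewrite -size_poly_gt0 sP.
pose rs := enum (predC1 (0 : K)).
have srs : size rs = (2 * n)%N by rewrite /rs -cardE cardC1 -/q qE /n; lia.
have : ~~ all (root P) rs.
  apply/negP => hall; have := max_poly_roots P0 hall (enum_uniq _).
  by rewrite srs sP ltnS /n; lia.
case/allPn => x; rewrite mem_enum /= => x0 hx.
have xq : x ^+ (2 * n) = 1.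
  apply: (mulfI x0); rewrite mulr1 -exprS (_ : (2 * n).+1 = q); first exact: expf_card.
  by rewrite qE /n; lia.
have y2 : (x ^+ n - 1) * (x ^+ n + 1) = 0.
  by rewrite -subr_sqr -exprM mulnC xq expr1n subrr.
move: y2 => /eqP; rewrite mulf_eq0 => /orP [|].
  by rewrite /root /P !hornerE in hx; move=> h; rewrite h in hx.
move=> h; exists (x ^+ k); rewrite -exprM mulnC.
by apply/eqP; rewrite -subr_eq0 opprK.
Qed.


Lemma sum2sq (hq : odd #|K|) : exists a b : K, a ^+ 2 + b ^+ 2 = -1.
Proof.
pose S := [set x ^+ 2 | x : K].
pose r := fun v : K => odflt 0 [pick y | y ^+ 2 == v].
have rS : forall x : K, r (x ^+ 2) ^+ 2 = x ^+ 2.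
  move=> x; rewrite /r; case: pickP => [y /eqP //|/(_ x)]; by rewrite eqxx.
pose S' := r @: S.
have cov : [set: K] \subset S' :|: [set - y | y in S'].
  apply/subsetP => x _; rewrite inE.
  have hx : x ^+ 2 \in S by apply/imsetP; exists x.
  have : (x - r (x ^+ 2)) * (x + r (x ^+ 2)) = 0 by rewrite -subr_sqr rS subrr.
  move/eqP; rewrite mulf_eq0 => /orP [|].
    by rewrite subr_eq0 => /eqP ->; rewrite imset_f.
  rewrite addr_eq0 => /eqP ->; apply/orP; right; apply/imsetP; exists (r (x ^+ 2)) => //.
  exact: imset_f.
have c1 : (#|K| <= 2 * #|S|)%N.
  have := subset_leq_card cov; rewrite cardsT => h.
  apply: (leq_trans h); rewrite (leq_trans (leq_card_setU _ _)) //.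
  have e1 : (#|S'| <= #|S|)%N by apply: leq_imset_card.
  have e2 : (#|[set - y | y in S']| <= #|S'|)%N by apply: leq_imset_card.
  by rewrite mul2n -addnn leq_add // (leq_trans e2 e1).
pose T := [set -1 - v | v in S].
have cT : #|T| = #|S|.
  by apply: card_imset => u v /= h; apply: oppr_inj; apply: (addrI (-1)).
have cU := cardsUI S T.
have cU' : (#|S :|: T| <= #|K|)%N by apply: max_card.
have c2 : (0 < #|S :&: T|)%N.
  have : (#|K| < 2 * #|S|)%N.
    rewrite ltn_neqAle c1 andbT; apply/negP => /eqP h.
    by move: hq; rewrite h mul2n odd_double.
  move=> h; move: cU cU'; rewrite cT; set a := #|S :|: T|; set b := #|S :&: T|; set c := #|S|; move: h; rewrite -/c; lia.
case/card_gt0P: c2 => v; rewrite inE => /andP [/imsetP [a _ ->] /imsetP [w /imsetP [b _ ->] e]].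
exists a, b; rewrite e; ring.
Qed.
End FF.
Section P.
Variable F : finFieldType.

Lemma irr_size (p : {poly F}) : irreducible_poly p -> (1 < size p)%N.
Proof. by case. Qed.

Lemma irr_nosq (p : {poly F}) (pm : p \is monic) (pi : irreducible_poly p) :
  (#|F| ^ (size p).-1 %% 4 = 3)%N -> forall h, ~~ (p %| h ^+ 2 + 1).
Proof.
move=> hq h; apply/negP => hd.
pose mi : monic_irreducible_poly p := (pi, pm).
pose K := {poly %/ p with mi}.
have cK : #|K| = (#|F| ^ (size p).-1)%N by rewrite card_qfpoly.
have := @no_sqrtm1 K; rewrite cK => /(_ hq (in_qpoly p h : K)) /negP; apply.
have := hd; rewrite -(in_qpoly_eq0 pm (irr_size pi)) rmorphD rmorphXn rmorph1 addr_eq0.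
by [].
Qed.

Lemma irr_sq (p : {poly F}) (pm : p \is monic) (pi : irreducible_poly p) :
  (#|F| ^ (size p).-1 %% 4 = 1)%N -> exists h, p %| h ^+ 2 + 1.
Proof.
move=> hq.
pose mi : monic_irreducible_poly p := (pi, pm).
pose K := {poly %/ p with mi}.
have cK : #|K| = (#|F| ^ (size p).-1)%N by rewrite card_qfpoly.
have hq' : (#|K| %% 4 = 1)%N by rewrite cK.
have [x hx] := @sqrtm1 K hq'.
exists (@polyn _ _ (x : {poly %/ p})).
rewrite -(in_qpoly_eq0 pm (irr_size pi)) rmorphD rmorphXn rmorph1 /= qvalK.
by apply/eqP; rewrite -[x ^+ 2]/(x ^+ 2 : K) hx addNr.
Qed.

Lemma irr_dvd_sq (p a : {poly F}) : irreducible_poly p -> p %| a * a -> p %| a.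
Proof.
move=> pi h; apply/negPn/negP => na.
have := na; rewrite -(irreducible_poly_coprime _ pi) => cp.
by move: h; rewrite (Gauss_dvdpl _ cp) (negbTE na).
Qed.

Lemma val_step (p a b : {poly F}) : irreducible_poly p ->
  (forall h, ~~ (p %| h ^+ 2 + 1)) -> p %| a ^+ 2 + b ^+ 2 -> (p %| a) && (p %| b).
Proof.
move=> pi nsq hd.
have [pb|npb] := boolP (p %| b).
  rewrite andbT; apply: (irr_dvd_sq pi).
  rewrite (_ : a * a = (a ^+ 2 + b ^+ 2) - b * b); last by ring.
  by rewrite dvdp_sub // dvdp_mull.
have := npb; rewrite -(irreducible_poly_coprime _ pi) => /Bezout_eq1_coprimepP [[u v] /= e].
have := nsq (v * a); rewrite (_ : (v * a) ^+ 2 + 1 = v ^+ 2 * (a ^+ 2 + b ^+ 2) + (u * p) * (1 + v * b)).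
  by rewrite dvdp_add ?(dvdp_mull _ hd) // mulrAC dvdp_mull ?dvdpp.
have -> : u * p = 1 - v * b by rewrite -e; ring.
ring.
Qed.

Lemma val_ind (p : {poly F}) : irreducible_poly p ->
  (forall h, ~~ (p %| h ^+ 2 + 1)) ->
  forall m a b, p ^+ (2 * m + 1) %| a ^+ 2 + b ^+ 2 -> p ^+ m.+1 %| a.
Proof.
move=> pi nsq; elim=> [|m IH] a b.
  by rewrite muln0 add0n expr1 => /(val_step pi nsq) /andP [].
move=> hd.
have : p %| a ^+ 2 + b ^+ 2.
  by apply: dvdp_trans hd; rewrite -{1}(expr1 p); apply: dvdp_exp2l; lia.
move/(val_step pi nsq) => /andP [/dvdpP [a1 ea] /dvdpP [b1 eb]].
have p0 : p ^+ 2 != 0 by rewrite expf_neq0 ?irredp_neq0.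
have : p ^+ (2 * m + 1) %| a1 ^+ 2 + b1 ^+ 2.
  rewrite -(dvdp_mul2r _ _ p0) -exprD (_ : (2 * m + 1 + 2 = 2 * m.+1 + 1)%N); last by lia.
  by rewrite (_ : (a1 ^+ 2 + b1 ^+ 2) * p ^+ 2 = a ^+ 2 + b ^+ 2) // ea eb; ring.
move/IH => h1; rewrite ea exprS mulrC; exact: dvdp_mul.
Qed.


Local Notation k0 := (@ord0 1).
Local Notation k1 := (lift (@ord0 1) ord0).

Lemma obstruct (f p r : {poly F}) (fm : f \is monic) (fs : (1 < size f)%N) (e : nat) :
  irreducible_poly p -> (forall h, ~~ (p %| h ^+ 2 + 1)) ->
  f = p ^+ e * r -> odd e -> coprimep p r -> ~ exists_self_dual_code {poly %/ f} 2.
Proof.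
move=> pi nsq fE oe cpr [C [[C0 CD CZ] sd]].
pose k := e./2.
have ek : e = (2 * k + 1)%N by rewrite /k -{1}(odd_double_half e) oe; lia.
have pef : p ^+ e %| f by rewrite fE dvdp_mulr.
have key : forall c, C c -> p ^+ k.+1 %| (c 0 k0 : {poly F}).
  move=> c hc; have := (sd c).1 hc c hc; move/(form_eq0 fm fs); rewrite sum2 -!expr2 => hf.
  apply: (val_ind pi nsq (b := (c 0 k1 : {poly F}))); rewrite -ek.
  exact: dvdp_trans pef hf.
have pk1f : p ^+ k.+1 %| f.
  by apply: dvdp_trans pef; apply: dvdp_exp2l; lia.
pose z := row2 (in_qpoly f (r * p ^+ k)) 0.
have zC : C z.
  apply/(sd z).2 => c hc; apply/(form_eq0 fm fs); rewrite sum2 row2E0 row2E1 qv0 mul0r addr0.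
  rewrite (in_qpolyE fm fs) mulrC (dvdp_mod _ (dvdpp f)) modp_mul -(dvdp_mod _ (dvdpp f)).
  have /dvdpP [w ew] := key c hc.
  have fE2 : f %= p ^+ (2 * k + 1) * r by rewrite fE ek eqpxx.
  rewrite ew (eqp_dvdl _ fE2).
  have -> : w * p ^+ k.+1 * (r * p ^+ k) = w * (p ^+ (2 * k + 1) * r).
    rewrite exprS exprD expr1 mulnC exprM; ring.
  exact: dvdp_mull.
have := key z zC; rewrite row2E0 (in_qpolyE fm fs) (dvd_mod _ pk1f) exprS.
rewrite dvdp_mul2r ?expf_neq0 ?irredp_neq0 //.
by move=> h; move: cpr; rewrite (irreducible_poly_coprime _ pi) h.
Qed.

End P.
Section B.
Variables (F : finFieldType) (f : {poly F}).
Hypotheses (fm : f \is monic) (fs : (1 < size f)%N).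
Local Notation A := {poly %/ f}.

Lemma modstrip1 (a b : {poly F}) : (f %| (a %% f) * (b %% f)) = (f %| a * b).
Proof.
by rewrite (dvdp_mod _ (dvdpp f)) modp_mul mulrC modp_mul -(dvdp_mod _ (dvdpp f)) mulrC.
Qed.

Lemma sd1_sq : exists_self_dual_code A 1 -> exists g, f = g ^+ 2.
Proof.
move=> [C [[C0 CD CZ] sd]].
pose I q := C (const_mx (in_qpoly f q)).
have Icomb : forall a b p q, I p -> I q -> I (a * p + b * q).
  move=> a b p q hp hq; rewrite /I.
  have -> : const_mx (in_qpoly f (a * p + b * q)) =
    in_qpoly f a *: const_mx (in_qpoly f p) + in_qpoly f b *: const_mx (in_qpoly f q) :> 'rV[A]_1.
    by apply/matrixP => i j; rewrite !mxE rmorphD !rmorphM.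
  by apply: CD; apply: CZ.
have cE : forall c : 'rV[A]_1, c = const_mx (in_qpoly f (c 0 0 : {poly F})).
  by move=> c; apply/matrixP => i j; rewrite !ord1 mxE qvalK.
have If : I f.
  rewrite /I (_ : in_qpoly f f = 0); last by apply/eqP; rewrite (in_qpoly_eq0 fm fs) dvdpp.
  by rewrite (_ : const_mx 0 = 0) //; apply/matrixP => i j; rewrite !mxE.
have gen : forall n (h : {poly F}), (size h <= n)%N -> I h -> h != 0 ->
    exists h0, [/\ I h0, h0 != 0 & forall q, I q -> h0 %| q].
  elim=> [|n IH] h sh Ih h0.
    by move: h0; rewrite -size_poly_eq0; move: sh; case: (size h).
  case: (classic (exists q, I q /\ ~~ (h %| q))) => [[q [Iq nq]]|nex].
    apply: (IH (q %% h)).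
    - by rewrite -ltnS (leq_trans _ sh) // ltn_modp.
    - rewrite (_ : q %% h = 1 * q + (- (q %/ h)) * h); first exact: Icomb.
      by rewrite {2}(divp_eq q h); ring.
    - by apply: contra nq => /eqP /modp_eq0P.
  exists h; split => // q Iq; apply/negPn/negP => nq; apply: nex; by exists q.
have [h0 [Ih0 h00 hdiv]] := gen _ _ (leqnn _) If (f_neq0 fs).
have ff : f %| h0 * h0.
  have := (sd _).1 Ih0 _ Ih0; move/(form_eq0 fm fs); rewrite big_ord1 mxE (in_qpolyE fm fs).
  by rewrite modstrip1.
have hf := hdiv f If.
pose k := f %/ h0.
have fk : f = k * h0 by rewrite divpK.
have Ik : I k.
  apply/(sd _).2 => c hc; apply/(form_eq0 fm fs); rewrite big_ord1 mxE (in_qpolyE fm fs).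
  rewrite (dvdp_mod _ (dvdpp f)) mulrC modp_mul -(dvdp_mod _ (dvdpp f)).
  have : I (c 0 0 : {poly F}) by rewrite /I -cE.
  move/hdiv => /dvdpP [w ew]; rewrite ew.
  rewrite (_ : w * h0 * k = w * f); first exact: dvdp_mull.
  by rewrite fk; ring.
have hk := hdiv k Ik.
have kh : k %| h0.
  by rewrite -(dvdp_mul2r _ _ h00) -fk.
have ekh : k %= h0 by rewrite /eqp kh hk.
have := eqp_eq ekh.
set a := lead_coef k; set b := lead_coef h0 => eab.
have b0 : b != 0 by rewrite lead_coef_eq0.
have ab : a * b = 1.
  by rewrite /a /b -lead_coefM -fk; apply/eqP; exact: fm.
have kE : k = (a / b)%:P * h0.
  by apply: (scalerI b0); rewrite eab mul_polyC scalerA mulrC divfK.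
exists ((b^-1)%:P * h0).
have aE : a = b^-1 by rewrite -[a]mulr1 -(mulfV b0) mulrA ab mul1r.
rewrite fk kE aE polyCM; ring.
Qed.
End B.
Lemma pow4_3 q d : (q %% 4 = 3)%N -> odd d -> (q ^ d %% 4 = 3)%N.
Proof.
move=> hq od; rewrite -modnXm hq -(odd_double_half d) od /= add1n.
elim: d./2 => [|j IH] //.
rewrite doubleS !expnS in IH *; move: IH; set x := (3 ^ _)%N; lia.
Qed.

Lemma pow4_1 q d : odd q -> ~~ odd d -> (q ^ d %% 4 = 1)%N.
Proof.
move=> oq ed; rewrite -modnXm -(odd_double_half d) (negbTE ed) /= add0n.
have h2 : ((q %% 4) ^ 2 %% 4 = 1)%N.
  have : (q %% 4 = 1 \/ q %% 4 = 3)%N by move: oq; lia.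
  by case=> ->.
elim: d./2 => [|j IH] //.
rewrite doubleS !expnS mulnA -(expnS _ 1) -modnMml h2 mul1n //.
Qed.

Section P2.
Variable F : finFieldType.

Lemma coprime_irr (p q : {poly F}) : p \is monic -> irreducible_poly p ->
  q \is monic -> irreducible_poly q -> p != q -> coprimep p q.
Proof.
move=> pm pi qm qi pq; rewrite (irreducible_poly_coprime _ pi); apply/negP => pdq.
have sp : size p != 1%N by rewrite eq_sym; case: pi => /ltn_eqF ->.
by have := qi.2 p sp pdq; rewrite (eqp_monic pm qm) (negbTE pq).
Qed.

Lemma coprime_prod (p : {poly F}) (s : seq ({poly F} * nat)) (E : {poly F} * nat -> nat) :
  p \is monic -> irreducible_poly p ->
  (forall x, x \in s -> [/\ x.1 \is monic, irreducible_poly x.1 & x.1 != p]) ->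
  coprimep p (\prod_(x <- s) x.1 ^+ E x).
Proof.
move=> pm pi; elim: s => [|x s IH] hs; first by rewrite big_nil coprimep1.
rewrite big_cons coprimepMr; apply/andP; split.
  have [xm xi xp] := hs x (mem_head _ _).
  by apply: coprimep_expr; apply: coprime_irr => //; rewrite eq_sym.
by apply: IH => y ys; apply: hs; rewrite inE ys orbT.
Qed.

Lemma crt (m n a b : {poly F}) : coprimep m n -> m %| a ^+ 2 + 1 -> n %| b ^+ 2 + 1 ->
  exists h, m * n %| h ^+ 2 + 1.
Proof.
move=> /[dup] cmn /Bezout_eq1_coprimepP [[u v] /= e] ha hb.
exists (a * (v * n) + b * (u * m)).
rewrite Gauss_dvdp //; apply/andP; split.
  rewrite (_ : _ + 1 = (a ^+ 2 + 1) + m * (u * (b - a) * (a * (v * n) + b * (u * m) + a))).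
    by rewrite dvdp_add // dvdp_mulr.
  have -> : v * n = 1 - u * m by rewrite -e; ring.
  ring.
rewrite (_ : _ + 1 = (b ^+ 2 + 1) + n * (v * (a - b) * (a * (v * n) + b * (u * m) + b))).
  by rewrite dvdp_add // dvdp_mulr.
have -> : u * m = 1 - v * n by rewrite -e; ring.
ring.
Qed.

Lemma crt_all (s : seq ({poly F} * nat)) :
  (forall x, x \in s -> x.1 \is monic /\ irreducible_poly x.1) ->
  uniq (map fst s) ->
  (forall x, x \in s -> odd x.2 -> exists h, x.1 %| h ^+ 2 + 1) ->
  exists h, \prod_(x <- s) x.1 ^+ odd x.2 %| h ^+ 2 + 1.
Proof.
elim: s => [|x s IH] hmi hu hsq; first by exists 0; rewrite big_nil dvd1p.
move: hu => /= /andP [xn us].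
have [h' hh'] : exists h, \prod_(y <- s) y.1 ^+ odd y.2 %| h ^+ 2 + 1.
  apply: IH => //.
  - by move=> y ys; apply: hmi; rewrite inE ys orbT.
  - by move=> y ys; apply: hsq; rewrite inE ys orbT.
rewrite big_cons; case: (boolP (odd x.2)) => ox /=.
  have [hx hhx] := hsq x (mem_head _ _) ox.
  have [xm xi] := hmi x (mem_head _ _).
  have cop : coprimep x.1 (\prod_(y <- s) y.1 ^+ odd y.2).
    apply: coprime_prod => // y ys.
    have [ym yi] : y.1 \is monic /\ irreducible_poly y.1 by apply: hmi; rewrite inE ys orbT.
    split => //; apply: contraNneq xn => <-; exact: map_f.
  by have [h hh] := crt cop hhx hh'; exists h; rewrite expr1.
by exists h'; rewrite expr0 mul1r.
Qed.
End P2.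

Lemma sd_all (A : comNzRingType) m : exists_self_dual_code A m ->
  forall l, (0 < l)%N -> (m %| l)%N -> exists_self_dual_code A l.
Proof.
move=> hm l l0 /dvdnP [k lk]; subst l.
case: k l0 => // k _.
elim: k => [|k IH]; first by rewrite mul1n.
by rewrite mulSn addnC; apply: sd_sum.
Qed.

Theorem mainTheorem11 (F : finFieldType) (f : {poly F})
  (f_monic : f \is monic) (f_deg : (1 < size f)%N) :
  (* (a) *)
  (forall l : nat, (0 < l)%N -> (4 %| l)%N ->
     exists_self_dual_code {poly %/ f} l)
  /\
  (* (b) *)
  ((forall l : nat, (1 <= l)%N -> exists_self_dual_code {poly %/ f} l)
     <-> exists g : {poly F}, f = g ^+ 2)
  /\
  (* (c) *)
  (forall s : seq ({poly F} * nat),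
     (forall pe, pe \in s ->
        [/\ pe.1 \is monic, irreducible_poly pe.1 & (0 < pe.2)%N]) ->
     uniq (map fst s) ->
     f = \prod_(pe <- s) pe.1 ^+ pe.2 ->
     let c1 := forall l : nat, (0 < l)%N -> ~~ odd l ->
                 exists_self_dual_code {poly %/ f} l in
     let c2 := exists g f' : {poly F}, f = g ^+ 2 * f' /\
                 exists h : {poly F}, f' %| h ^+ 2 + 1 in
     let c3 := [\/ (#|F| %% 4 = 3)%N /\
                     (forall pe, pe \in s -> ~~ odd ((size pe.1).-1 * pe.2)),
                   ~~ odd #|F|
                 | (#|F| %% 4 = 1)%N] in
     (c1 <-> c2) /\ (c2 <-> c3)).
Proof.
have ab : exists a b : F, a ^+ 2 + b ^+ 2 = -1.
  case: (boolP (odd #|F|)) => oq; first exact: sum2sq.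
  exists 1, 0; rewrite expr1n expr0n /= addr0.
  by apply/eqP; rewrite -subr_eq0 opprK even_two.
have ext4 : exists_self_dual_code {poly %/ f} 4.
  have [a [b hab]] := ab.
  apply: (@sd4 _ (in_qpoly f a%:P) (in_qpoly f b%:P)).
  apply/eqP; rewrite -subr_eq0 opprK.
  have -> : in_qpoly f a%:P ^+ 2 + in_qpoly f b%:P ^+ 2 + 1 = in_qpoly f ((a ^+ 2 + b ^+ 2 + 1)%:P).
    by rewrite !polyCD !polyC_exp !rmorphD !rmorphXn polyC1 rmorph1.
  by rewrite hab addNr polyC0 rmorph0.
split; first exact: sd_all ext4.
split.
  split; first by move=> h; apply: (sd1_sq f_monic f_deg); apply: h.
  by move=> [g fg] l l1; apply: (sd_all (sd1 f_monic f_deg fg)) => //; exact: dvd1n.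
move=> s hs hu hf c1 c2 c3.
have H21 : c2 -> c1.
  move=> [g [f' [fg [h hh]]]] l l0 el.
  by apply: (sd_all (sd2 f_monic f_deg fg hh)) => //; rewrite dvdn2.
have H13 : c1 -> c3.
  move=> hc1; have sd := hc1 2%N isT isT.
  case: (boolP (odd #|F|)) => oq; last exact: Or32.
  have [q1|q3] : (#|F| %% 4 = 1 \/ #|F| %% 4 = 3)%N by move: oq; lia.
    exact: Or33.
  apply: Or31; split => // pe pein; apply/negP; rewrite oddM => /andP [od oe].
  have [pm pi _] := hs pe pein.
  pose r := \prod_(x <- rem pe s) x.1 ^+ x.2.
  have fE : f = pe.1 ^+ pe.2 * r by rewrite {1}hf (perm_big _ (perm_to_rem pein)) big_cons.
  have us' : uniq (map fst (pe :: rem pe s)) by rewrite -(perm_uniq (perm_map fst (perm_to_rem pein))).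
  move: us' => /= /andP [nin _].
  have cop : coprimep pe.1 r.
    apply: coprime_prod => // x xin.
    have [xm xi _] := hs x (mem_rem xin).
    by split => //; apply: contraNneq nin => <-; exact: map_f.
  have nsq := irr_nosq pm pi (pow4_3 q3 od).
  exact: (obstruct f_monic f_deg pi nsq fE oe cop sd).
have H32 : c3 -> c2.
  case.
  - move=> [q3 hde].
    exists (\prod_(x <- s) x.1 ^+ x.2./2), (\prod_(x <- s) x.1 ^+ odd x.2); split.
      rewrite {1}hf -prodrXl -big_split /=; apply: eq_bigr => x _.
      by rewrite -exprM -exprD muln2 addnC odd_double_half.
    apply: crt_all => //.
    + by move=> x xin; have [? ? _] := hs x xin.
    + move=> x xin ox; have [xm xi _] := hs x xin.
      apply: (irr_sq xm xi); apply: pow4_1; first by move: q3; lia.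
      by move: (hde x xin); rewrite oddM ox andbT.
  - move=> eq; exists 1, f; split; first by rewrite expr1n mul1r.
    exists 1; by rewrite expr1n -polyC1 -polyCD even_two // polyC0 dvdp0.
  - move=> q1; have [a ha] := sqrtm1 q1.
    exists 1, f; split; first by rewrite expr1n mul1r.
    by exists a%:P; rewrite -polyC_exp ha -polyC1 -polyCD addNr polyC0 dvdp0.
split; split.
- by move/H13/H32.
- exact: H21.
- by move/H21/H13.
- exact: H32.
Qed.
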